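(* Let $X$ be a $d$-dimensional Minkowski space and $A\subset X$ finite. For each point $\mathbf{p}\in A\cap\mathrm{FT}(A)$, $\mathbf{p}$ is a vertex of $\operatorname{conv}(A\cap\mathrm{FT}(A))$, and the set $\left\{\frac{\mathbf{q}-\mathbf{p}}{\|\mathbf{q}-\mathbf{p}\|} : \mathbf{q}\in A\cap\mathrm{FT}(A),\ \mathbf{q}\neq\mathbf{p}\right\}$ is contained in a proper exposed face of the unit ball.
   Context: A Minkowski space is a finite-dimensional real normed space $(X,\|\cdot\|)$ with unit ball $B$. A proper exposed face of $B$ is the intersection of $B$ with a supporting hyperplane of $B$. For finite $A$, $\mathrm{FT}(A)$ is the set of minimizers of $\mathbf{x}\mapsto\sum_{\mathbf{a}\in A}\|\mathbf{x}-\mathbf{a}\|$. *)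

(* Defs.v *)
From HB Require Import structures.
From mathcomp Require Import all_boot all_order all_algebra.
From mathcomp Require Import reals.
Set Implicit Arguments. Unset Strict Implicit. Unset Printing Implicit Defensive.
Import Order.TTheory GRing.Theory Num.Theory.
Local Open Scope ring_scope.

Section Minkowski.
Variables (R : realType) (d : nat).
Local Notation V := 'rV[R]_d.

(* N is a norm on V = R^d; (V, N) is then a d-dimensional Minkowski space. *)
Definition is_norm (N : V -> R) : Prop :=
  [/\ (forall x, N x = 0 -> x = 0),
      (forall (a : R) x, N (a *: x) = `|a| * N x) &
      (forall x y, N (x + y) <= N x + N y)].

Definition lfun (u x : V) : R := \sum_(i < d) u ord0 i * x ord0 i.

Definition unit_ball (N : V -> R) (x : V) : Prop := N x <= 1.

Definition proper_exposed_face (N : V -> R) (F : V -> Prop) : Prop :=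
  exists (u : V) (c : R),
    [/\ u != 0,
        (forall x, unit_ball N x -> lfun u x <= c),
        (forall x, F x <-> (unit_ball N x /\ lfun u x = c)),
        (exists x, F x) &
        (exists x, unit_ball N x /\ ~ F x)].

Definition FT (N : V -> R) (A : seq V) (x : V) : Prop :=
  forall y : V, \sum_(a <- A) N (x - a) <= \sum_(a <- A) N (y - a).

Definition conv (S : V -> Prop) (x : V) : Prop :=
  exists (s : seq V) (w : V -> R),
    [/\ (forall v, v \in s -> S v),
        (forall v, 0 <= w v),
        \sum_(v <- s) w v = 1 &
        x = \sum_(v <- s) w v *: v].

Definition vertex (C : V -> Prop) (p : V) : Prop :=
  C p /\ forall x y (t : R), C x -> C y -> 0 < t < 1 ->
    p = t *: x + (1 - t) *: y -> x = p /\ y = p.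

End Minkowski.

(* Main.v *)
Require Import Defs.
From HB Require Import structures.
From mathcomp Require Import all_boot all_order all_algebra.
From mathcomp Require Import reals.
From mathcomp Require Import boolp classical_sets ring lra.
Import Order.TTheory GRing.Theory Num.Theory.
Local Open Scope ring_scope.

Section HBsec.
Variables (R : realType) (d : nat).
Local Notation V := 'rV[R]_d.
Local Open Scope classical_set_scope.

Definition Inf (g : R -> R) : R := inf (range g).

Lemma Inf_lb (g : R -> R) m : (forall t, m <= g t) -> forall t, Inf g <= g t.
Proof.
move=> hm t; apply: ge_inf; last by exists t.
by exists m => _ [s _ <-].
Qed.

Lemma Inf_glb (g : R -> R) y : (forall t, y <= g t) -> y <= Inf g.
Proof.
move=> hy; apply: lb_le_inf; first by exists (g 0), 0.
by move=> _ [s _ <-].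
Qed.

Definition subl (q : V -> R) :=
  (forall x y, q (x + y) <= q x + q y) /\ (forall a x, 0 <= a -> q (a *: x) = a * q x).

Lemma subl0 q : subl q -> q 0 = 0.
Proof. by case=> _ h; rewrite -(scale0r (0:V)) h // mul0r. Qed.

Lemma sublN q x : subl q -> - q x <= q (- x).
Proof.
move=> hq; have := hq.1 x (-x); rewrite subrr subl0 //; lra.
Qed.

Definition step (e : V) (q : V -> R) (x : V) : R :=
  Inf (fun t => q (x + t *: e) - t * q e).

Lemma step_low e q x t : subl q -> - q (- x) <= q (x + t *: e) - t * q e.
Proof.
move=> hq.
have h1 := hq.1 (x + t *: e) (- x).
rewrite addrAC subrr add0r in h1.
suff : t * q e <= q (t *: e) by lra.
have [t0|t0] := leP 0 t; first by rewrite hq.2.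
have -> : t *: e = (- t) *: (- e) by rewrite scalerN scaleNr opprK.
rewrite hq.2; last lra.
have h2 := sublN q e hq.
have : 0 <= - t * (q (- e) + q e) by apply: mulr_ge0; lra.
rewrite mulrDr !mulNr.
lra.
Qed.

Lemma step_le e q x : subl q -> step e q x <= q x.
Proof.
move=> hq; have := Inf_lb _ _ (fun t => step_low e q x t hq) 0.
by rewrite scale0r addr0 mul0r subr0.
Qed.

Lemma step_ge e q x : subl q -> - q (- x) <= step e q x.
Proof. by move=> hq; apply: Inf_glb => t; apply: step_low. Qed.


Lemma step_lb e q x t : subl q -> step e q x <= q (x + t *: e) - t * q e.
Proof. by move=> hq; apply: (Inf_lb _ _ (fun t => step_low e q x t hq)). Qed.

Lemma step_trans e q x s : subl q -> step e q (x + s *: e) = step e q x + s * q e.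
Proof.
move=> hq; apply/eqP; rewrite eq_le; apply/andP; split.
  suff : step e q (x + s *: e) - s * q e <= step e q x by lra.
  rewrite [X in _ <= X]/step; apply: Inf_glb => t.
  have := step_lb e q (x + s *: e) (t - s) hq.
  rewrite -addrA -scalerDl addrCA subrr addr0; lra.
rewrite [X in _ <= X]/step; apply: Inf_glb => t.
have := step_lb e q x (s + t) hq.
rewrite scalerDl addrA; lra.
Qed.

Lemma step_sub e q x y : subl q -> step e q (x + y) <= step e q x + step e q y.
Proof.
move=> hq.
suff : step e q (x + y) - step e q y <= step e q x by lra.
rewrite [X in _ <= X]/step; apply: Inf_glb => t1.
suff : step e q (x + y) - (q (x + t1 *: e) - t1 * q e) <= step e q y by lra.
rewrite [X in _ <= X]/step; apply: Inf_glb => t2.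
have h1 := step_lb e q (x + y) (t1 + t2) hq.
have h2 := hq.1 (x + t1 *: e) (y + t2 *: e).
have e2 : x + t1 *: e + (y + t2 *: e) = x + y + (t1 + t2) *: e.
  by rewrite scalerDl; rewrite addrACA.
rewrite e2 in h2.
nra.
Qed.

Lemma step0 e q : subl q -> step e q 0 = 0.
Proof.
move=> hq; apply/eqP; rewrite eq_le; apply/andP; split.
  by have := step_le e q 0 hq; rewrite (subl0 _ hq).
by have := step_ge e q 0 hq; rewrite oppr0 (subl0 _ hq) oppr0.
Qed.

Lemma step_hom e q a x : subl q -> 0 <= a -> step e q (a *: x) = a * step e q x.
Proof.
move=> hq; rewrite le_eqVlt => /orP[/eqP <-|a0].
  by rewrite scale0r mul0r step0.
apply/eqP; rewrite eq_le; apply/andP; split.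
  suff : step e q (a *: x) / a <= step e q x.
    by rewrite ler_pdivrMr // mulrC.
  rewrite [X in _ <= X]/step; apply: Inf_glb => t.
  rewrite ler_pdivrMr //.
  have := step_lb e q (a *: x) (a * t) hq.
  rewrite -scalerA -scalerDr hq.2; last exact: ltW.
  nra.
rewrite [X in _ <= X]/step; apply: Inf_glb => t.
have := step_lb e q x (t / a) hq.
have -> : a *: x + t *: e = a *: (x + (t / a) *: e).
  by rewrite scalerDr scalerA mulrCA mulfV ?gt_eqF // mulr1.
rewrite hq.2; last exact: ltW.
move=> h.
have : a * step e q x <= a * (q (x + t / a *: e) - t / a * q e).
  by rewrite ler_pM2l.
rewrite mulrBr mulrA mulrCA mulfV ?gt_eqF // mulr1.
lra.
Qed.

Lemma step_subl e q : subl q -> subl (step e q).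
Proof.
move=> hq; split; first by move=> x y; apply: step_sub.
by move=> a x a0; apply: step_hom.
Qed.

Definition transl (q : V -> R) (f : V) := forall x s, q (x + s *: f) = q x + s * q f.

Lemma Inf_shift (g : R -> R) m k : (forall t, m <= g t) ->
  Inf (fun t => g t + k) = Inf g + k.
Proof.
move=> hm; apply/eqP; rewrite eq_le; apply/andP; split.
  suff : Inf (fun t => g t + k) - k <= Inf g by lra.
  apply: Inf_glb => t.
  have hm' : forall t, m + k <= g t + k by move=> t'; rewrite lerD2r.
  have := Inf_lb (fun t => g t + k) (m + k) hm' t.
  lra.
apply: Inf_glb => t.
have := Inf_lb g m hm t; lra.
Qed.

Lemma step_transl e f q : subl q -> transl q f -> transl (step e q) f.
Proof.
move=> hq hf.
have key : forall x s, step e q (x + s *: f) = step e q x + s * q f.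
  move=> x s; rewrite /step.
  have -> : (fun t => q (x + s *: f + t *: e) - t * q e) =
            (fun t => (q (x + t *: e) - t * q e) + s * q f).
    apply: funext => t; rewrite addrAC hf; lra.
  apply: (Inf_shift _ (- q (- x))) => t; exact: step_low.
move=> x s; rewrite key.
have := key 0 1; rewrite add0r scale1r step0 // add0r mul1r => ->.
by [].
Qed.


Fixpoint Qs (s : seq 'I_d) (q : V -> R) : V -> R :=
  match s with [::] => q | i :: s' => Qs s' (step (delta_mx 0 i) q) end.

Lemma Qs_subl s q : subl q -> subl (Qs s q).
Proof. by elim: s q => [|i s IH] q hq //=; apply: IH; apply: step_subl. Qed.

Lemma Qs_le s q x : subl q -> Qs s q x <= q x.
Proof.
elim: s q => [|i s IH] q hq //=.
apply: le_trans (IH _ (step_subl (delta_mx 0 i) q hq)) _; exact: step_le.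
Qed.

Lemma Qs_transl s q f : subl q -> transl q f -> transl (Qs s q) f.
Proof.
elim: s q => [|i s IH] q hq hf //=.
apply: IH; first exact: step_subl.
exact: step_transl.
Qed.

Lemma Qs_translE s q : subl q -> forall i, i \in s -> transl (Qs s q) (delta_mx 0 i).
Proof.
elim: s q => [|j s IH] q hq i //=.
rewrite in_cons => /orP[/eqP ->|hi]; last by apply: IH => //; apply: step_subl.
apply: Qs_transl; first exact: step_subl.
have h0 := step0 (delta_mx 0 j) q hq.
move=> x s'; rewrite step_trans //.
have := step_trans (delta_mx 0 j) q 0 1 hq.
by rewrite add0r scale1r h0 add0r mul1r => ->.
Qed.

Lemma lin_of_transl (l : V -> R) : subl l -> (forall i, transl l (delta_mx 0 i)) ->
  forall x, l x = \sum_(i < d) x 0 i * l (delta_mx 0 i).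
Proof.
move=> hl ht x.
have gen : forall s : seq 'I_d, l (\sum_(j <- s) x 0 j *: delta_mx 0 j) =
    \sum_(j <- s) x 0 j * l (delta_mx 0 j).
  elim=> [|j s IH]; first by rewrite !big_nil (subl0 _ hl).
  by rewrite !big_cons addrC ht IH addrC.
by rewrite {1}(row_sum_delta x) gen.
Qed.

Lemma hahn (p : V -> R) : subl p -> forall v : V,
  exists u : V, (forall x, lfun u x <= p x) /\ lfun u v = p v.
Proof.
move=> hp v.
set q0 := step v p.
have hq0 : subl q0 by apply: step_subl.
set l := Qs (enum 'I_d) q0.
have hl : subl l by apply: Qs_subl.
have ht : forall i, transl l (delta_mx 0 i).
  by move=> i; apply: Qs_translE => //; rewrite mem_enum.
exists (\row_i l (delta_mx 0 i)).
have lE : forall x, lfun (\row_i l (delta_mx 0 i)) x = l x.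
  move=> x; rewrite (lin_of_transl _ hl ht x) /lfun.
  by apply: eq_bigr => i _; rewrite mxE mulrC.
have q0v : q0 v = p v.
  have := step_trans v p 0 1 hp.
  by rewrite add0r scale1r step0 // add0r mul1r.
have q0nv : q0 (- v) = - p v.
  have := step_trans v p 0 (-1) hp.
  by rewrite add0r scaleN1r step0 // add0r mulN1r.
split.
  move=> x; rewrite lE; apply: le_trans (Qs_le _ _ _ hq0) _; exact: step_le.
rewrite lE; apply/eqP; rewrite eq_le; apply/andP; split.
  by rewrite -q0v; apply: Qs_le.
have h1 : l (- v) <= - p v by rewrite -q0nv; apply: Qs_le.
have h2 : - l v <= l (- v) by apply: sublN.
lra.
Qed.

End HBsec.

Arguments subl {R d}.
Arguments hahn {R d}.

Section Main.
Variables (R : realType) (d : nat) (N : 'rV[R]_d -> R) (hN : is_norm N).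
Local Notation V := 'rV[R]_d.

Lemma N0 : N 0 = 0.
Proof. by case: hN => _ h _; rewrite -(scale0r (0:V)) h normr0 mul0r. Qed.

Lemma NN x : N (- x) = N x.
Proof. by case: hN => _ h _; rewrite -scaleN1r h normrN normr1 mul1r. Qed.

Lemma Nge0 x : 0 <= N x.
Proof.
case: hN => _ _ h; have := h x (- x); rewrite subrr N0 NN; lra.
Qed.

Lemma Nsubl : subl N.
Proof.
case: hN => _ h1 h2; split => // a x a0; by rewrite h1 ger0_norm.
Qed.

Lemma Npos x : x != 0 -> 0 < N x.
Proof.
move=> x0; rewrite lt_def Nge0 andbT; apply/eqP => h.
by case: hN => h0 _ _; move/eqP: x0; apply; apply: h0.
Qed.

Lemma Nsum (I : Type) (s : seq I) (F : I -> V) :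
  N (\sum_(i <- s) F i) <= \sum_(i <- s) N (F i).
Proof.
elim: s => [|i s IH]; first by rewrite !big_nil N0.
rewrite !big_cons; case: hN => _ _ h.
apply: le_trans (h _ _) _; rewrite lerD2l //.
Qed.

Lemma le_sum_mem (T : eqType) (s : seq T) (g : T -> R) a :
  (forall b, b \in s -> 0 <= g b) -> a \in s -> g a <= \sum_(b <- s) g b.
Proof.
elim: s => [|b s IH] //= hg; rewrite big_cons in_cons => /orP[/eqP ->|ha].
  have : 0 <= \sum_(c <- s) g c.
    rewrite big_seq; apply: sumr_ge0 => c hc; apply: hg.
    by rewrite in_cons hc orbT.
  lra.
have hb : 0 <= g b by apply: hg; rewrite in_cons eqxx.
have hg' : forall c, c \in s -> 0 <= g c.
  by move=> c hc; apply: hg; rewrite in_cons hc orbT.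
have := IH hg' ha.
lra.
Qed.


Lemma lfunDZ (u : V) a x y : lfun u (a *: x + y) = a * lfun u x + lfun u y.
Proof.
rewrite /lfun mulr_sumr -big_split; apply: eq_bigr => i _; by rewrite !mxE mulrDr mulrCA.
Qed.

Lemma lfun0 (u : V) : lfun u 0 = 0.
Proof. by rewrite /lfun big1 // => i _; rewrite mxE mulr0. Qed.

Lemma lfunD (u : V) x y : lfun u (x + y) = lfun u x + lfun u y.
Proof. by rewrite -[x]scale1r lfunDZ mul1r scale1r. Qed.

Lemma lfunZ (u : V) a x : lfun u (a *: x) = a * lfun u x.
Proof. by rewrite -[a *: x]addr0 lfunDZ lfun0 addr0. Qed.

Lemma lfunN (u : V) x : lfun u (- x) = - lfun u x.
Proof. by rewrite -scaleN1r lfunZ mulN1r. Qed.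

Lemma lfunB (u : V) x y : lfun u (x - y) = lfun u x - lfun u y.
Proof. by rewrite lfunD lfunN. Qed.

Lemma lfun_sum (u : V) (I : Type) (s : seq I) (F : I -> V) :
  lfun u (\sum_(i <- s) F i) = \sum_(i <- s) lfun u (F i).
Proof.
elim: s => [|i s IH]; first by rewrite !big_nil lfun0.
by rewrite !big_cons lfunD IH.
Qed.

Lemma sum_cst (W : nmodType) (T : Type) (s : seq T) (c : W) :
  \sum_(q <- s) c = c *+ size s.
Proof.
elim: s => [|i s IH]; first by rewrite big_nil.
by rewrite big_cons IH /= mulrS.
Qed.

Definition fsum (A : seq V) (y : V) := \sum_(a <- A) N (y - a).

Lemma core (A : seq V) p : p \in A -> FT N A p ->
  N (\sum_(q <- [seq q <- A | `[< FT N A q >]]) (q - p)) =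
  \sum_(q <- [seq q <- A | `[< FT N A q >]]) N (q - p).
Proof.
move=> pA pFT.
set S := [seq q <- A | `[< FT N A q >]].
have memS : forall q, q \in S -> FT N A q.
  by move=> q; rewrite mem_filter => /andP[/asboolP].
have pS : p \in S by rewrite mem_filter pA andbT; apply/asboolP.
set k : R := (size S)%:R.
have k0 : 0 < k.
  rewrite ltr0n; case: (S) pS => //.
set m : V := k^-1 *: \sum_(q <- S) q.
have fq : forall q, q \in S -> fsum A q = fsum A p.
  move=> q qS; apply/eqP; rewrite eq_le; apply/andP; split.
    exact: (memS q qS).
  exact: pFT.
have mE : forall a, m - a = k^-1 *: \sum_(q <- S) (q - a).
  move=> a; rewrite sumrB sum_cst -scaler_nat scalerBr scalerA mulVf ?gt_eqF //.
  by rewrite scale1r.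
have Da : forall a, N (m - a) <= k^-1 * \sum_(q <- S) N (q - a).
  move=> a; rewrite mE; case: hN => _ h _; rewrite h ger0_norm; last first.
    by rewrite invr_ge0 ltW.
  by rewrite ler_pM2l ?invr_gt0 //; apply: Nsum.
have tot : \sum_(a <- A) k^-1 * \sum_(q <- S) N (q - a) = fsum A p.
  rewrite -mulr_sumr exchange_big /=.
  have -> : \sum_(j <- S) \sum_(i <- A) N (j - i) = \sum_(j <- S) fsum A p.
    by rewrite big_seq_cond [RHS]big_seq_cond; apply: eq_bigr => q /andP[qS _]; by rewrite -(fq q qS).
  rewrite sum_cst -mulr_natl -/k mulrA mulVf ?gt_eqF // mul1r.
  by [].
have Dp := @le_sum_mem _ A (fun a => k^-1 * \sum_(q <- S) N (q - a) - N (m - a)) p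
   (fun a _ => ltac:(rewrite subr_ge0; exact: Da)) pA.
rewrite /= sumrB tot in Dp.
have hm := pFT m.
have eq1 : N (m - p) = k^-1 * \sum_(q <- S) N (q - p).
  have := Da p; rewrite /fsum in Dp hm; lra.
have -> : \sum_(q <- S) (q - p) = k *: (m - p).
  by rewrite mE scalerA mulfV ?gt_eqF // scale1r.
case: hN => _ h _; rewrite h eq1 ger0_norm ?ltW // mulrA mulfV ?gt_eqF // mul1r.
by [].
Qed.


Lemma lfun_u0 (x : V) : lfun 0 x = 0.
Proof. by rewrite /lfun big1 // => i _; rewrite mxE mul0r. Qed.

Lemma N1 (v : V) : 0 < N v -> N ((N v)^-1 *: v) = 1.
Proof.
move=> hv; case: hN => _ h _; rewrite h ger0_norm ?invr_ge0 ?ltW //.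
by rewrite mulVf ?gt_eqF.
Qed.

End Main.
Arguments N0 {R d N}. Arguments NN {R d N}. Arguments Nge0 {R d N}.
Arguments Nsubl {R d N}. Arguments Npos {R d N} hN {x}. Arguments Nsum {R d N}.
Arguments N1 {R d N} hN {v}. Arguments core {R d N} hN {A p}.
Arguments le_sum_mem {R T}. Arguments lfunDZ {R d}. Arguments lfun0 {R d}.
Arguments lfunD {R d}. Arguments lfunZ {R d}. Arguments lfunN {R d}.
Arguments lfunB {R d}. Arguments lfun_sum {R d}. Arguments lfun_u0 {R d}.

Theorem lemma4p14 (R : realType) (d : nat) (N : 'rV[R]_d -> R)
    (hN : is_norm N) (hd : (0 < d)%N)
    (A : seq 'rV[R]_d) (hA : uniq A) (p : 'rV[R]_d) :
  p \in A -> FT N A p ->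
  vertex (conv (fun q => q \in A /\ FT N A q)) p /\
  exists F : 'rV[R]_d -> Prop,
    proper_exposed_face N F /\
    forall q, q \in A -> FT N A q -> q != p -> F ((N (q - p))^-1 *: (q - p)).
Proof.
move=> pA pFT.
set S := [seq q <- A | `[< FT N A q >]].
have memS : forall q, q \in A -> FT N A q -> q \in S.
  by move=> q qA qF; rewrite mem_filter qA andbT; apply/asboolP.
have memS' : forall q, q \in S -> q \in A /\ FT N A q.
  by move=> q; rewrite mem_filter => /andP[/asboolP ? ?].
have hw := core hN pA pFT; rewrite -/S in hw.
set w := \sum_(q <- S) (q - p) in hw.
set j : 'I_d := Ordinal hd.
set v0 : 'rV[R]_d := if w == 0 then delta_mx 0 j else w.
have v0nz : v0 != 0.
  rewrite /v0; case: (eqVneq w 0) => [_|hw0]; last by [].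
  apply/eqP => h.
  have := congr1 (fun M : 'rV[R]_d => M 0 j) h; rewrite !mxE !eqxx /=.
  by move/eqP; rewrite oner_eq0.
have v0pos := Npos hN v0nz.
have [u [uleN uv0]] := hahn N (Nsubl hN) v0.
have Nge := Nge0 hN.
have key : forall q, q \in S -> lfun u (q - p) = N (q - p).
  move=> q qS; case: (eqVneq w 0) => hw0.
    have hs : \sum_(q <- S) N (q - p) = 0 by rewrite -hw hw0 (N0 hN).
    have hq := @le_sum_mem _ _ S (fun q => N (q - p)) q (fun a _ => Nge _) qS.
    rewrite hs /= in hq.
    have nq : N (q - p) = 0 by apply/eqP; rewrite eq_le hq Nge.
    have [h0 _ _] := hN; rewrite (h0 _ nq) lfun0 (N0 hN) //.
  have uw : lfun u w = \sum_(q <- S) N (q - p).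
    have v0w : v0 = w by rewrite /v0 (negbTE hw0).
    by rewrite -hw -v0w uv0.
  rewrite /w lfun_sum in uw.
  have hq := @le_sum_mem _ _ S (fun q => N (q - p) - lfun u (q - p)) q
     (fun a _ => ltac:(rewrite subr_ge0; exact: uleN)) qS.
  rewrite /= sumrB -uw subrr in hq.
  have := uleN (q - p); lra.
have convL : forall x, conv (fun q => q \in A /\ FT N A q) x ->
    0 <= lfun u (x - p) /\ (lfun u (x - p) = 0 -> x = p).
  move=> x [s [wt [sC wt0 wt1 ->]]].
  have xE : \sum_(v <- s) wt v *: v - p = \sum_(v <- s) wt v *: (v - p).
    rewrite -{1}(scale1r p) -wt1 scaler_suml -sumrB.
    by apply: eq_bigr => v _; rewrite scalerBr.
  rewrite xE lfun_sum.
  have ev : forall v, v \in s -> lfun u (wt v *: (v - p)) = wt v * N (v - p).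
    move=> v vs; rewrite lfunZ key //; case: (sC v vs) => ? ?; exact: memS.
  have nn : forall v, v \in s -> 0 <= lfun u (wt v *: (v - p)).
    by move=> v vs; rewrite ev // mulr_ge0.
  split; first by rewrite big_seq; apply: sumr_ge0 => v; apply: nn.
  move=> h0; apply/eqP; rewrite -subr_eq0 xE; apply/eqP.
  rewrite big_seq big1 // => v vs.
  have := @le_sum_mem _ _ s (fun v => lfun u (wt v *: (v - p))) v nn vs.
  rewrite h0 /= ev // => hle.
  have : wt v * N (v - p) = 0.
    apply/eqP; rewrite eq_le hle mulr_ge0 //.
  move/eqP; rewrite mulf_eq0 => /orP[/eqP ->|/eqP nv]; first by rewrite scale0r.
  by have [h0' _ _] := hN; rewrite (h0' _ nv) scaler0.
split.
  split.
    exists [:: p], (fun _ => 1); split.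
    - by move=> v; rewrite inE => /eqP ->.
    - by move=> _; apply: ler01.
    - by rewrite big_cons big_nil addr0.
    - by rewrite big_cons big_nil addr0 scale1r.
  move=> x y t cx cy /andP[t0 t1] hp.
  have [gx zx] := convL x cx.
  have [gy zy] := convL y cy.
  have E : t *: (x - p) + (1 - t) *: (y - p) = 0.
    rewrite !scalerBr addrACA -opprD -scalerDl subrKC scale1r -hp subrr //.
  have := congr1 (lfun u) E; rewrite lfunD !lfunZ lfun0 => E2.
  have h1 : 0 <= t * lfun u (x - p) by rewrite mulr_ge0 // ltW.
  have h2 : 0 <= (1 - t) * lfun u (y - p) by rewrite mulr_ge0 // subr_ge0 ltW.
  have e1 : t * lfun u (x - p) = 0 by lra.
  have e2 : (1 - t) * lfun u (y - p) = 0 by lra.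
  move/eqP: e1; rewrite mulf_eq0 gt_eqF //= => /eqP /zx ->.
  move/eqP: e2; rewrite mulf_eq0 subr_eq0 gt_eqF //= => /eqP /zy ->.
  by [].
exists (fun x => unit_ball N x /\ lfun u x = 1); split.
  exists u, 1; split.
  - apply/eqP => u0; move: uv0; rewrite u0 lfun_u0 => h; move: v0pos; rewrite -h ltxx //.
  - by move=> x hx; apply: le_trans (uleN x) hx.
  - by [].
  - exists ((N v0)^-1 *: v0); split; first by rewrite /unit_ball (N1 hN).
    by rewrite lfunZ uv0 mulVf ?gt_eqF.
  - exists 0; split; first by rewrite /unit_ball (N0 hN).
    by case=> _; rewrite lfun0 => /eqP; rewrite eq_sym oner_eq0.
move=> q qA qF qp.
have qpnz : q - p != 0 by rewrite subr_eq0.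
have qpos := Npos hN qpnz.
split; first by rewrite /unit_ball (N1 hN).
by rewrite lfunZ key ?memS // mulVf ?gt_eqF.
Qed.
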